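(* Let $R>0$, let $(E,d)$ be a metric space whose Borel $\sigma$-algebra makes it a standard Borel space, let $\nu$ be a Radon probability measure, and let $A\subset\mathrm{Supp}(\nu)$ be closed; assume that for every $\sigma>0$ the problem $\inf_\mu\{\mathrm{Ent}_\nu(\mu):\mu(E)=1,\ \int_E d_R(x,A)^2\,d\mu(x)\le\sigma^2\}$ is attained by a unique measure. For $a>0$ let $$d\mu_{a,R}(x)=\frac{\exp(-a\,d_R(x,A)^2)}{\int_E\exp(-a\,d_R(y,A)^2)\,d\nu(y)}\,d\nu(x).$$ Let $0<\varepsilon<R$. Then $\mu_{a,R}\big(E\setminus A^{\varepsilon}\big)\to0$ as $a\to\infty$, where $A^\varepsilon=\{x\in E: d^2(x,A)\le\varepsilon\}$.
   Context: $d(x,A)=\inf_{y\in A}d(x,y)$, $d_R=\min(d,R)$; $\mathrm{Ent}_\nu(\mu)=\int\frac{d\mu}{d\nu}\ln\frac{d\mu}{d\nu}\,d\nu$ if $\mu\ll\nu$, $+\infty$ otherwise; $\mathrm{Supp}(\nu)$ is the complement of the union of all $\nu$-null open sets. *)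

(* Defs.v *)
From HB Require Import structures.
From mathcomp Require Import all_boot all_order all_algebra.
From mathcomp Require Import all_classical all_reals all_analysis.
Set Implicit Arguments. Unset Strict Implicit. Unset Printing Implicit Defensive.
Import Order.TTheory GRing.Theory Num.Theory.
Import numFieldNormedType.Exports.
Local Open Scope classical_set_scope.
Local Open Scope ring_scope.

(* A metric space with a distinguished point (harmless: E carries a
   probability measure, hence is nonempty).  Needed because MathComp-Analysis
   measurable types are pointed. *)
#[short(type="pointedMetricType")]
HB.structure Definition PointedMetric (K : numDomainType) :=
  { M of Metric K M & isPointed M }.

Section defs.
Context {R : realType} {E : pointedMetricType R}.

Definition BorelT : measurableType (@open E).-sigma := g_sigma_algebraType (@open E).

(* ---- Standard Borel: there is a Polish (separable, completely
   metrizable) topology on E whose Borel sigma-algebra is that of E. ---- *)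
Definition is_metric (md : E -> E -> R) : Prop :=
  [/\ forall x y, 0 <= md x y,
      forall x y, md x y = 0 <-> x = y,
      forall x y, md x y = md y x &
      forall x y z, md x z <= md x y + md y z].

Definition mopen (md : E -> E -> R) (U : set E) : Prop :=
  forall x, U x -> exists2 r : R, 0 < r & [set y | md x y < r] `<=` U.

Definition mcomplete (md : E -> E -> R) : Prop :=
  forall u : nat -> E,
    (forall e : R, 0 < e -> exists N : nat, forall m n : nat,
        (N <= m)%N -> (N <= n)%N -> md (u m) (u n) < e) ->
    exists l : E, forall e : R, 0 < e -> exists N : nat,
        forall n : nat, (N <= n)%N -> md (u n) l < e.

Definition mseparable (md : E -> E -> R) : Prop :=
  exists D : set E, countable D /\
    forall x (e : R), 0 < e -> exists2 y, D y & md x y < e.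

Definition standard_borel : Prop :=
  exists md : E -> E -> R, [/\ is_metric md, mcomplete md, mseparable md &
    <<s mopen md >> = <<s @open E >>].

(* ---- Radon probability measure: inner regular by compact sets
   (local finiteness is automatic for a probability measure). ---- *)
Definition radon (nu : probability BorelT R) : Prop :=
  forall B : set BorelT, measurable B ->
    nu B = ereal_sup [set nu K | K in [set K : set E | compact K /\ K `<=` B]].

Definition supp (nu : probability BorelT R) : set E :=
  ~` \bigcup_(U in [set U : set E | open U /\ nu U = 0%E]) U.

(* d(x,A) = inf_{y in A} d(x,y) in \bar R (= +oo when A is empty) *)
Definition distA (A : set E) (x : E) : \bar R :=
  ereal_inf [set (mdist x y)%:E | y in A].

Definition distAR (A : set E) (Rr : R) (x : E) : R :=
  fine (mine (distA A x) Rr%:E).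

Definition Ent (nu : probability BorelT R) (mu : probability BorelT R) : \bar R :=
  if `[< mu `<< nu >] then
    let f := fun x => fine (Radon_Nikodym (charge_of_finite_measure mu) nu x) in
    (\int[nu]_x (f x * ln (f x))%:E)%E
  else +oo%E.

Definition feasible (A : set E) (Rr sigma : R) (mu : probability BorelT R) : Prop :=
  (\int[mu]_x ((distAR A Rr x) ^+ 2)%:E <= (sigma ^+ 2)%:E)%E.

Definition is_minimizer (nu : probability BorelT R) (A : set E) (Rr sigma : R)
    (mu : probability BorelT R) : Prop :=
  feasible A Rr sigma mu /\
  forall mu' : probability BorelT R, feasible A Rr sigma mu' ->
    (Ent nu mu <= Ent nu mu')%E.

Definition unique_minimizer (nu : probability BorelT R) (A : set E) (Rr sigma : R) : Prop :=
  exists mu : probability BorelT R, is_minimizer nu A Rr sigma mu /\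
    forall mu' : probability BorelT R, is_minimizer nu A Rr sigma mu' ->
      forall S : set BorelT, measurable S -> mu' S = mu S.

Definition mu_aR (nu : probability BorelT R) (A : set E) (Rr a : R) (S : set BorelT) : R :=
  Rintegral nu S (fun x => expR (- a * (distAR A Rr x) ^+ 2)) /
  Rintegral nu setT (fun y => expR (- a * (distAR A Rr y) ^+ 2)).

Definition Aeps (A : set E) (eps : R) : set E :=
  [set x | (distA A x * distA A x <= eps%:E)%E].

End defs.

(* Main.v *)
Require Import Defs.
From HB Require Import structures.
From mathcomp Require Import all_boot all_order all_algebra.
From mathcomp Require Import all_classical all_reals all_analysis.
From mathcomp Require Import ring lra.
Import Order.TTheory GRing.Theory Num.Theory.
Import numFieldNormedType.Exports.
Local Open Scope classical_set_scope.
Local Open Scope ring_scope.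

Lemma le_int0 d (T : measurableType d) (R : realType) (mu : measure T R)
  (f g : T -> \bar R) : (forall x, 0 <= f x)%E -> (forall x, f x <= g x)%E ->
  (\int[mu]_x f x <= \int[mu]_x g x)%E.
Proof.
move=> f0 fg.
have g0 x : (0 <= g x)%E by exact: le_trans (f0 x) (fg x).
rewrite !ge0_integralTE//=.
apply: ereal_sup_le => _ [h hf <-]; exists h => //= x.
exact: le_trans (hf x) (fg x).
Qed.

Lemma fin_bnd (R : realType) (x : \bar R) (b : R) :
  (0 <= x)%E -> (x <= b%:E)%E -> x = (fine x)%:E /\ 0 <= fine x <= b.
Proof.
case: x => [r| |] //= h0 h1.
by rewrite -!lee_fin h0 h1.
Qed.

Section S.
Variables (R : realType) (E : pointedMetricType R) (A : set E) (Rr : R).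
Hypothesis Rr0 : 0 < Rr.

Lemma distA_ge0 x : (0 <= distA A x)%E.
Proof.
apply/ereal_infP => _ [y _ <-]; rewrite lee_fin; exact: mdist_ge0.
Qed.

Lemma distAR_cases x :
  (distA A x = +oo%E /\ distAR A Rr x = Rr) \/
  exists r, [/\ 0 <= r, distA A x = r%:E & distAR A Rr x = Num.min r Rr].
Proof.
have := distA_ge0 x; rewrite /distAR.
case: (distA A x) => [r| |] //= r0.
  by right; exists r; split => //; rewrite -EFin_min.
by left; split => //; rewrite /Order.min /= ltry.
Qed.

End S.

Theorem lemmaB1 (R : realType) (E : pointedMetricType R)
  (nu : probability (@BorelT R E) R) (A : set E) (Rr eps : R) :
  0 < Rr ->
  @standard_borel R E ->
  radon nu ->
  closed A ->
  A `<=` supp nu ->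
  (forall sigma : R, 0 < sigma -> unique_minimizer nu A Rr sigma) ->
  0 < eps -> eps < Rr ->
  mu_aR nu A Rr a (~` Aeps A eps) @[a --> +oo] --> 0.
Proof.
move=> Rr0 _ _ _ Asupp Hmin eps0 epsR.
have [[x0 Ax0]|nA] := pselect (exists x, A x); last first.
  exfalso.
  have [|mu [[feas _] _]] := Hmin (Rr / 2); first by rewrite divr_gt0.
  have dR : distAR A Rr = fun=> Rr.
    apply/funext => x; rewrite /distAR /distA.
    have -> : [set (mdist x y)%:E | y in A] = set0.
      by apply/seteqP; split => // z [y Ay _]; apply: nA; exists y.
    by rewrite ereal_inf0.
  move: feas; rewrite /feasible dR integral_cst//.
  rewrite [X in (_ * X)%E](_ : _ = 1%E); last exact: probability_setT.
  rewrite mule1 lee_fin.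
  nra.
pose c := Num.min eps (Rr ^+ 2).
have c0 : 0 < c by rewrite lt_min eps0 exprn_gt0.
have ceps : c <= eps by rewrite ge_min lexx.
have cR : c <= Rr ^+ 2 by rewrite ge_min lexx orbT.
pose del := Num.min 1 (c / 2).
have del0 : 0 < del by rewrite lt_min ltr01 divr_gt0.
have del1 : del <= 1 by rewrite ge_min lexx.
have delc : del <= c / 2 by rewrite ge_min lexx orbT.
pose U := interior (ball x0 del).
have mU : measurable (U : set (BorelT)).
  by apply: sub_sigma_algebra; exact: open_interior.
have Ux0 : U x0 by exact: nbhsx_ballx.
have pos : (0 < nu U)%E.
  rewrite lt0e measure_ge0 andbT; apply/eqP => nU0.
  apply: (Asupp x0 Ax0); exists U => //; split => //; exact: open_interior.
have [nUE /andP[p0 p1]] := @fin_bnd _ _ 1 (measure_ge0 nu U) (probability_le1 nu mU).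
set p := fine (nu U) in nUE p0 p1.
have pgt0 : 0 < p by rewrite -lte_fin -nUE.
have hU : forall x, U x -> distAR A Rr x ^+ 2 <= del.
  move=> x /interior_subset /ball_sym; rewrite ballEmdist /= => hx.
  have hle : (distA A x <= (mdist x x0)%:E)%E by apply: ereal_inf_lbound; exists x0.
  case: (@distAR_cases R E A Rr x) => [[dE _]|[r [r0 dE ->]]].
    by rewrite dE leye_eq in hle.
  rewrite dE lee_fin in hle.
  have m0 : 0 <= Num.min r Rr by rewrite le_min r0 ltW.
  have m1 : Num.min r Rr <= r by rewrite ge_min lexx.
  nra.
have hS : forall x, ~ Aeps A eps x -> c <= distAR A Rr x ^+ 2.
  move=> x; rewrite /Aeps /=.
  case: (@distAR_cases R E A Rr x) => [[dE ->]|[r [r0 dE ->]]] // .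
  rewrite dE -EFinM lee_fin => /negP; rewrite -ltNge => h.
  have [hr|hr] := leP r Rr.
    have : r <= Num.min r Rr by rewrite le_min lexx hr.
    nra.
  have : Rr <= Num.min r Rr by rewrite le_min lexx (ltW hr).
  nra.
pose k := c - del.
have k0 : 0 < k by rewrite /k; lra.
apply: (@squeeze_cvgr _ _ _ _ (fun=> 0) (fun a => expR (- (a * k)) * p^-1)).
- near=> a.
  have a0 : 0 <= a by near: a; apply: nbhs_pinfty_ge; rewrite num_real.
  rewrite /mu_aR /Rintegral.
  set N := (\int[nu]_(x in ~` Aeps A eps) _)%E.
  set D := (\int[nu]_x _)%E.
  have N0 : (0 <= N)%E by apply: integral_ge0 => x _; rewrite lee_fin expR_ge0.
  have N1 : (N <= (expR (- a * c))%:E)%E.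
    rewrite /N integral_mkcond.
    apply: le_trans (@le_int0 _ _ _ nu _ (fun=> (expR (- a * c))%:E) _ _) _.
    - by move=> x; rewrite /patch; case: ifP => _; rewrite ?lee_fin ?expR_ge0.
    - move=> x; rewrite /patch; case: ifP => [/set_mem hx|_]; rewrite lee_fin ?expR_ge0 //.
      rewrite ler_expR; have := hS x hx; nra.
    rewrite integral_cst//.
    rewrite [X in (_ * X)%E](_ : _ = 1%E); last exact: probability_setT.
    by rewrite mule1.
  have D0 : (0 <= D)%E by apply: integral_ge0 => x _; rewrite lee_fin expR_ge0.
  have D1 : (D <= 1%:E)%E.
    apply: le_trans (@le_int0 _ _ _ nu _ (fun=> 1%E) _ _) _.
    - by move=> x; rewrite lee_fin expR_ge0.
    - move=> x; rewrite lee_fin expR_le1; have := sqr_ge0 (distAR A Rr x); nra.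
    rewrite integral_cst//.
    rewrite [X in (_ * X)%E](_ : _ = 1%E); last exact: probability_setT.
    by rewrite mule1.
  have D2 : ((expR (- a * del) * p)%:E <= D)%E.
    apply: le_trans (_ : _ <= \int[nu]_x (expR (- a * del) * \1_U x)%:E)%E _.
      rewrite (@integralZl_indic _ _ _ nu setT measurableT (fun=> U)) //; last first.
        by move=> /=; rewrite ltNge expR_ge0.
      rewrite integral_indic // setIT nUE EFinM //.
    apply: le_int0.
      by move=> x; rewrite lee_fin mulr_ge0 ?expR_ge0.
    move=> x; rewrite indicE; case: (boolP (x \in _)) => [/set_mem hx|_].
      rewrite mulr1 lee_fin ler_expR; have := hU x hx; nra.
    by rewrite mulr0 lee_fin expR_ge0.
  have [NE /andP[n0 n1]] := @fin_bnd _ _ _ N0 N1.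
  have [DE /andP[d0 d1]] := @fin_bnd _ _ _ D0 D1.
  rewrite DE lee_fin in D2.
  have Dpos : 0 < fine D by apply: lt_le_trans D2; rewrite mulr_gt0 ?expR_gt0.
  apply/andP; split; first by rewrite divr_ge0.
  rewrite ler_pdivrMr //.
  apply: le_trans n1 _.
  apply: le_trans (_ : _ <= expR (- (a * k)) * p^-1 * (expR (- a * del) * p)) _.
    rewrite (_ : - a * c = - (a * k) + - a * del); last by rewrite /k; ring.
    rewrite expRD [X in _ <= X](_ : _ = expR (- (a * k)) * expR (- a * del)) //.
    field; by rewrite gt_eqF.
  by apply: ler_wpM2l => //; rewrite mulr_ge0 ?expR_ge0 // invr_ge0 ltW.
- exact: cvg_cst.
- rewrite -(mul0r p^-1); apply: cvgMl.
  apply: (@cvg_comp _ _ _ (fun a => a * k) (fun x => expR (- x)) _ +oo%R); last first.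
    exact: cvgr_expR.
  apply/cvgryPge => M; near=> a.
  have : M / k <= a by near: a; apply: nbhs_pinfty_ge; rewrite num_real.
  by rewrite ler_pdivrMr.
Unshelve. all: by end_near.
Qed.
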